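(* Let $K_{w,F}$ be an allowed folded ribbon unknot whose knot diagram $K$ is a nondegenerate triangle (a 3-stick unknot) and such that the folds at all three vertices are of the same type. Then $\frac{w}{2}\le r_{in}$, where $r_{in}$ is the inradius of the triangle $K$.
   Context: For an oriented polygonal knot diagram $K$ with vertices $v_1,v_2,v_3$ and edges $e_i=[v_i,v_{i+1}]$ (indices mod 3), the fold angle $\theta_i\in[0,\pi]$ at $v_i$ is the angle between $e_{i-1}$ and $e_i$. The folded ribbon $K_w$ of width $w$ is built by placing at each $v_i$ a fold line of length $w/\cos(\theta_i/2)$ centered at $v_i$ perpendicular to the bisector of $\theta_i$, and joining ends of consecutive fold lines by boundary segments parallel to and at distance $w/2$ from $K$ (so the ribbon along each edge is the strip of points within distance $w/2$ of the edge's line, bounded by the fold lines). Folding information $F$ records at each vertex whether the ribbon of $e_i$ lies over (overfold) or under (underfold) the ribbon of $e_{i-1}$; the folds are of the same type if all are overfolds or all are underfolds. $K_{w,F}$ is allowed if the ribbon is immersed away from the fold lines and admits a choice of crossing information (a continuous, antisymmetric, transitive $\pm1$-valued function on pairs of distinct points of the ribbon with the same image in the plane, recording which lies over which) agreeing with $F$. *)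

(* Defs.v *)
From Stdlib Require Import Reals Lra ZArith.
Open Scope R_scope.

Definition pt := (R * R)%type.
Definition vsub (p q : pt) : pt := (fst p - fst q, snd p - snd q).
Definition vadd (p q : pt) : pt := (fst p + fst q, snd p + snd q).
Definition vscale (a : R) (p : pt) : pt := (a * fst p, a * snd p).
Definition dot (p q : pt) : R := fst p * fst q + snd p * snd q.
Definition cross (p q : pt) : R := fst p * snd q - snd p * fst q.
Definition vnorm (p : pt) : R := sqrt (dot p p).
Definition dist (p q : pt) : R := vnorm (vsub p q).
Definition unitv (p : pt) : pt := vscale (/ vnorm p) p.
Definition perp (p : pt) : pt := (- snd p, fst p).
Definition dist_line (a b p : pt) : R :=
  Rabs (cross (vsub b a) (vsub p a)) / vnorm (vsub b a).

Inductive idx := I0 | I1 | I2.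
Definition nxt (i : idx) : idx := match i with I0 => I1 | I1 => I2 | I2 => I0 end.
Definition prv (i : idx) : idx := match i with I0 => I2 | I1 => I0 | I2 => I1 end.

(* A triangular knot diagram K with vertices v I0, v I1, v I2, oriented
   v1 -> v2 -> v3 -> v1; edge e_i = [v i, v (nxt i)]. *)
Definition nondegenerate (v : idx -> pt) : Prop :=
  cross (vsub (v I1) (v I0)) (vsub (v I2) (v I0)) <> 0.

Definition fold_angle (v : idx -> pt) (i : idx) : R :=
  let a := vsub (v (prv i)) (v i) in
  let b := vsub (v (nxt i)) (v i) in
  acos (dot a b / (vnorm a * vnorm b)).

Definition bisector (v : idx -> pt) (i : idx) : pt :=
  vadd (unitv (vsub (v (prv i)) (v i))) (unitv (vsub (v (nxt i)) (v i))).

Definition fold_dir (v : idx -> pt) (i : idx) : pt := unitv (perp (bisector v i)).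

Definition fold_line (v : idx -> pt) (w : R) (i : idx) (p : pt) : Prop :=
  exists t, Rabs t <= w / (2 * cos (fold_angle v i / 2)) /\
            p = vadd (v i) (vscale t (fold_dir v i)).

Definition on_fold_carrier (v : idx -> pt) (i : idx) (p : pt) : Prop :=
  dot (vsub p (v i)) (bisector v i) = 0.

(* The piece of the ribbon along edge e_i: points within distance w/2 of the
   line of e_i, bounded by the fold lines at v_i and v_{i+1}
   (on the side of each fold line containing the edge). *)
Definition piece (v : idx -> pt) (w : R) (i : idx) (p : pt) : Prop :=
  dist_line (v i) (v (nxt i)) p <= w / 2 /\
  0 <= dot (vsub p (v i)) (bisector v i) /\
  0 <= dot (vsub p (v (nxt i))) (bisector v (nxt i)).

(* Points of the abstract ribbon: (i, p) with p in the piece of edge e_i. *)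
Definition rpt := (idx * pt)%type.
Definition in_ribbon (v : idx -> pt) (w : R) (x : rpt) : Prop :=
  piece v w (fst x) (snd x).
Definition image (x : rpt) : pt := snd x.

(* Gluing: the piece of e_i and the piece of e_{i+1} are joined along the
   fold line at v_{i+1}. *)
Definition same_rpt (v : idx -> pt) (x y : rpt) : Prop :=
  snd x = snd y /\
  (fst x = fst y \/
   (fst y = nxt (fst x) /\ on_fold_carrier v (fst y) (snd x)) \/
   (fst x = nxt (fst y) /\ on_fold_carrier v (fst x) (snd x))).

Definition double_pt (v : idx -> pt) (w : R) (x y : rpt) : Prop :=
  in_ribbon v w x /\ in_ribbon v w y /\ image x = image y /\ ~ same_rpt v x y.

(* neighbourhood of radius d of a ribbon point (quotient topology) *)
Definition rnear (v : idx -> pt) (d : R) (x x' : rpt) : Prop :=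
  exists x0, same_rpt v x x0 /\ fst x0 = fst x' /\ dist (snd x0) (snd x') < d.

(* Crossing information: c x y = 1 means x lies over y, -1 means under. *)
Definition crossing_info (v : idx -> pt) (w : R) (c : rpt -> rpt -> Z) : Prop :=
  (* well defined on the ribbon (compatible with the gluing) *)
  (forall x x' y y', double_pt v w x y -> in_ribbon v w x' -> in_ribbon v w y' ->
     same_rpt v x x' -> same_rpt v y y' -> c x y = c x' y') /\
  (forall x y, double_pt v w x y -> c x y = 1%Z \/ c x y = (-1)%Z) /\
  (forall x y, double_pt v w x y -> c y x = (- c x y)%Z) /\
  (forall x y z, double_pt v w x y -> double_pt v w y z -> double_pt v w x z ->
     c x y = 1%Z -> c y z = 1%Z -> c x z = 1%Z) /\
  (forall x y, double_pt v w x y -> exists d, 0 < d /\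
     forall x' y', double_pt v w x' y' -> rnear v d x x' -> rnear v d y y' ->
       c x' y' = c x y).

(* Folding information: F i = true iff the fold at v_i is an overfold, i.e.
   the ribbon of e_i lies over the ribbon of e_{i-1} near the fold line. *)
Definition agrees_with (v : idx -> pt) (w : R) (c : rpt -> rpt -> Z)
    (F : idx -> bool) : Prop :=
  forall i f, fold_line v w i f -> exists d, 0 < d /\
    forall p, dist p f < d -> double_pt v w (i, p) (prv i, p) ->
      c (i, p) (prv i, p) = (if F i then 1%Z else (-1)%Z).

Definition same_type (F : idx -> bool) : Prop := F I0 = F I1 /\ F I1 = F I2.

(* Ribbon immersed away from the fold lines: fold lines have finite length and
   the fold lines at the two ends of each edge do not meet (so each piece is a
   genuine, non self-intersecting quadrilateral). *)
Definition immersed_away_from_folds (v : idx -> pt) (w : R) : Prop :=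
  forall i, fold_angle v i < PI /\
    forall p, ~ (fold_line v w i p /\ fold_line v w (nxt i) p).

Definition allowed (v : idx -> pt) (w : R) (F : idx -> bool) : Prop :=
  0 < w /\ immersed_away_from_folds v w /\
  exists c, crossing_info v w c /\ agrees_with v w c F.

(* r is the inradius of the triangle: radius of the circle inscribed in the
   triangle, i.e. tangent to the three side lines with centre in the interior. *)
Definition inradius (v : idx -> pt) (r : R) : Prop :=
  exists a0 a1 a2 : R, 0 < a0 /\ 0 < a1 /\ 0 < a2 /\ a0 + a1 + a2 = 1 /\
    let c := vadd (vscale a0 (v I0)) (vadd (vscale a1 (v I1)) (vscale a2 (v I2))) in
    forall i, dist_line (v i) (v (nxt i)) c = r.

(* Main.v *)
Require Import Defs.
From Stdlib Require Import Reals Lra Lia Psatz ZArith Classical.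
Open Scope R_scope.

Lemma nxt_prv i : nxt (prv i) = i. Proof. destruct i; reflexivity. Qed.
Lemma prv_nxt i : prv (nxt i) = i. Proof. destruct i; reflexivity. Qed.
Lemma nxt_nxt i : nxt (nxt i) = prv i. Proof. destruct i; reflexivity. Qed.
Lemma prv_prv i : prv (prv i) = nxt i. Proof. destruct i; reflexivity. Qed.

Lemma vnorm_pos (x y : pt) : cross x y <> 0 -> 0 < vnorm x.
Proof.
  intro H. unfold vnorm. apply sqrt_lt_R0. destruct x as [x1 x2], y as [y1 y2].
  unfold cross, dot in *; simpl in *.
  destruct (Req_dec x1 0); destruct (Req_dec x2 0).
  - subst; exfalso; apply H; ring.
  - nra. - nra. - nra.
Qed.

Lemma vnorm_sq (x : pt) : vnorm x * vnorm x = dot x x.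
Proof. unfold vnorm. apply sqrt_sqrt. destruct x; unfold dot; simpl; nra. Qed.

Lemma pos_part (x y : pt) : cross x y <> 0 -> 0 < vnorm x + dot x y / vnorm y.
Proof.
  intro H.
  assert (Hx := vnorm_pos x y H).
  assert (Hy : 0 < vnorm y).
  { apply (vnorm_pos y x). intro E; apply H.
    destruct x, y; unfold cross in *; simpl in *; lra. }
  assert (Hx2 := vnorm_sq x). assert (Hy2 := vnorm_sq y).
  assert (L : dot x y * dot x y + cross x y * cross x y = dot x x * dot y y).
  { destruct x, y; unfold dot, cross; simpl; ring. }
  assert (C : 0 < cross x y * cross x y).
  { destruct (Rlt_dec 0 (cross x y)); [nra|]. assert (cross x y < 0) by lra. nra. }
  set (nx := vnorm x) in *. set (ny := vnorm y) in *. set (d := dot x y) in *.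
  assert (d > - (nx * ny)).
  { destruct (Rle_dec 0 d). nra.
    rewrite <- Hx2, <- Hy2 in L.
    assert (0 < nx * ny) by nra.
    destruct (Rle_dec d (-(nx*ny))); [|lra].
    assert (d*d >= (nx*ny)*(nx*ny)) by nra. nra. }
  apply Rmult_lt_reg_r with ny; [lra|].
  rewrite Rmult_0_l. unfold Rdiv. rewrite Rmult_plus_distr_r.
  rewrite Rmult_assoc, Rinv_l; lra.
Qed.

Lemma DOT (X Y Z q : pt) b c :
  cross (vsub Y X) (vsub Z X) <> 0 -> 0 <= b -> 0 <= c ->
  fst q = fst X + b*(fst Y - fst X) + c*(fst Z - fst X) ->
  snd q = snd X + b*(snd Y - snd X) + c*(snd Z - snd X) ->
  0 <= dot (vsub q X) (vadd (unitv (vsub Y X)) (unitv (vsub Z X))) /\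
  (0 < b + c -> 0 < dot (vsub q X) (vadd (unitv (vsub Y X)) (unitv (vsub Z X)))).
Proof.
  intros H Hb Hc H1 H2.
  set (x := vsub Y X) in *. set (y := vsub Z X) in *.
  assert (P1 := pos_part x y H).
  assert (P2 : 0 < vnorm y + dot y x / vnorm x).
  { apply pos_part. intro E; apply H. unfold x, y, cross in *; simpl in *; lra. }
  assert (Hx := vnorm_pos x y H).
  assert (Hy : 0 < vnorm y).
  { apply (vnorm_pos y x). intro E; apply H. unfold x, y, cross in *; simpl in *; lra. }
  assert (Hx2 := vnorm_sq x). assert (Hy2 := vnorm_sq y).
  assert (E : dot (vsub q X) (vadd (unitv x) (unitv y)) =
     b * (vnorm x + dot x y / vnorm y) + c * (vnorm y + dot y x / vnorm x)).
  { set (nx := vnorm x) in *. set (ny := vnorm y) in *.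
    unfold unitv. fold nx ny.
    assert (Q : vsub q X = vadd (vscale b x) (vscale c y)).
    { destruct q; unfold x, y, vsub, vadd, vscale in *; simpl in *. rewrite H1, H2. apply (f_equal2 pair); ring. }
    rewrite Q.
    destruct x as [x1 x2], y as [y1 y2]. unfold dot, vadd, vscale in *; simpl in *.
    assert (D : nx <> 0) by lra. assert (D' : ny <> 0) by lra.
    apply Rminus_diag_uniq.
    transitivity (b * / nx * (x1*x1+x2*x2 - nx*nx) + c * / ny * (y1*y1+y2*y2 - ny*ny)).
    field; auto. rewrite Hx2, Hy2. ring. }
  rewrite E. set (A := vnorm x + dot x y / vnorm y) in *. set (B := vnorm y + dot y x / vnorm x) in *.
  split. apply Rplus_le_le_0_compat; apply Rmult_le_pos; lra.
  intro. destruct (Rlt_dec 0 b).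
  - apply Rplus_lt_le_0_compat. apply Rmult_lt_0_compat; lra. apply Rmult_le_pos; lra.
  - apply Rplus_le_lt_0_compat. apply Rmult_le_pos; lra. apply Rmult_lt_0_compat; lra.
Qed.
Lemma lc (g : R -> Z) (sg : Z) (e0 : R) : 0 < e0 ->
  (forall s, 0 < s < e0 -> s <= 1 -> g s = sg) ->
  (forall s, 0 < s <= 1 -> exists e, 0 < e /\
      forall s', 0 < s' <= 1 -> Rabs (s' - s) < e -> g s' = g s) ->
  g 1 = sg.
Proof.
  intros He0 Hnear Hloc.
  set (E := fun s => s <= 1 /\ forall u, 0 < u <= s -> g u = sg).
  assert (Hb : bound E). { exists 1. intros s [Hs _]. exact Hs. }
  assert (Hne : exists x, E x). { exists 0. split. lra. intros; lra. }
  destruct (completeness E Hb Hne) as [T [HT1 HT2]].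
  set (m := Rmin (e0/2) 1).
  assert (Em : E m).
  { split. unfold m; apply Rmin_r. intros u Hu. apply Hnear. split. lra.
    unfold m in Hu. assert (Rmin (e0/2) 1 <= e0/2) by apply Rmin_l. lra.
    unfold m in Hu. assert (Rmin (e0/2) 1 <= 1) by apply Rmin_r. lra. }
  assert (Hm : 0 < m). { unfold m. apply Rmin_pos; lra. }
  assert (HmT : m <= T) by (apply HT1; exact Em).
  assert (HT1' : T <= 1). { apply HT2. intros s [Hs _]. exact Hs. }
  destruct (Hloc T) as [e [He Hl]]. lra.
  assert (Hex : exists s, E s /\ T - Rmin e T < s).
  { apply NNPP. intro N.
    assert (is_upper_bound E (T - Rmin e T)).
    { intros s Hs. apply Rnot_lt_le. intro. apply N. exists s; auto. }
    assert (T <= T - Rmin e T) by (apply HT2; auto).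
    assert (0 < Rmin e T) by (apply Rmin_pos; lra). lra. }
  destruct Hex as [s [[Hs1 Hs2] Hs3]].
  assert (Hsle : s <= T) by (apply HT1; split; auto).
  assert (Hmin1 : Rmin e T <= e) by apply Rmin_l.
  assert (Hmin2 : Rmin e T <= T) by apply Rmin_r.
  assert (HgT : g T = sg).
  { assert (0 < s) by lra.
    rewrite <- (Hs2 s) by lra. symmetry. apply Hl. lra.
    rewrite Rabs_left1 by lra. lra. }
  assert (ET : forall u, 0 < u <= T -> g u = sg).
  { intros u Hu. destruct (Rle_dec u s). apply Hs2; lra.
    rewrite Hl. exact HgT. lra. rewrite Rabs_left1 by lra. lra. }
  destruct (Rlt_dec T 1).
  - exfalso. set (T' := T + Rmin (e/2) (1 - T)).
    assert (Hp : 0 < Rmin (e/2) (1-T)) by (apply Rmin_pos; lra).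
    assert (H1 : Rmin (e/2) (1-T) <= e/2) by apply Rmin_l.
    assert (H2 : Rmin (e/2) (1-T) <= 1 - T) by apply Rmin_r.
    assert (E T').
    { split. unfold T'; lra. intros u Hu. destruct (Rle_dec u T). apply ET; lra.
      rewrite Hl. exact HgT. unfold T' in Hu. lra. rewrite Rabs_right by lra. unfold T' in Hu. lra. }
    assert (T' <= T) by (apply HT1; auto). unfold T' in *. lra.
  - apply ET. lra.
Qed.

Lemma vnorm_scale k a b : vnorm (k*a, k*b) = Rabs k * vnorm (a,b).
Proof.
  unfold vnorm, dot; simpl.
  replace (k*a*(k*a)+k*b*(k*b)) with (Rsqr k * (a*a+b*b)) by (unfold Rsqr; ring).
  rewrite sqrt_mult by (try apply Rle_0_sqr; nra). rewrite sqrt_Rsqr_abs. reflexivity.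
Qed.

Lemma dl_scale (A B ic : pt) s : 0 <= s ->
  dist_line A B (fst A + s*(fst ic - fst A), snd A + s*(snd ic - snd A)) = s * dist_line A B ic.
Proof.
  intro Hs. unfold dist_line.
  replace (cross (vsub B A) (vsub (fst A + s*(fst ic - fst A), snd A + s*(snd ic - snd A)) A))
    with (s * cross (vsub B A) (vsub ic A)) by (unfold cross, vsub; simpl; ring).
  rewrite Rabs_mult, (Rabs_pos_eq s Hs). unfold Rdiv; ring.
Qed.

Lemma dl_scale2 (C A ic : pt) s : 0 <= s ->
  dist_line C A (fst A + s*(fst ic - fst A), snd A + s*(snd ic - snd A)) = s * dist_line C A ic.
Proof.
  intro Hs. unfold dist_line.
  replace (cross (vsub A C) (vsub (fst A + s*(fst ic - fst A), snd A + s*(snd ic - snd A)) C))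
    with (s * cross (vsub A C) (vsub ic C)) by (unfold cross, vsub; simpl; ring).
  rewrite Rabs_mult, (Rabs_pos_eq s Hs). unfold Rdiv; ring.
Qed.

Lemma nd_i (v : idx -> pt) i : nondegenerate v ->
  cross (vsub (v (nxt i)) (v i)) (vsub (v (prv i)) (v i)) <> 0.
Proof.
  unfold nondegenerate; intro H; destruct i; simpl; auto;
  intro E; apply H; rewrite <- E; unfold cross, vsub; simpl; ring.
Qed.

Lemma key (v : idx -> pt) (w : R) (c : rpt -> rpt -> Z) (F : idx -> bool) (r : R) (ic : pt) (i : idx) :
  nondegenerate v -> 0 < w -> immersed_away_from_folds v w -> crossing_info v w c ->
  agrees_with v w c F ->
  (exists al be ga, 0 < al /\ 0 < be /\ 0 < ga /\ al + be + ga = 1 /\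
     fst ic = al * fst (v i) + be * fst (v (nxt i)) + ga * fst (v (prv i)) /\
     snd ic = al * snd (v i) + be * snd (v (nxt i)) + ga * snd (v (prv i))) ->
  (forall j, dist_line (v j) (v (nxt j)) ic = r) -> r < w / 2 ->
  double_pt v w (i, ic) (prv i, ic) /\ c (i, ic) (prv i, ic) = (if F i then 1%Z else (-1)%Z).
Proof.
  intros Hnd Hw Himm [Hwd [Hpm [Hanti [Htr Hcont]]]] HF
    [al [be [ga [Hal [Hbe [Hga [Hsum [Hic1 Hic2]]]]]]]] Hr Hlt.
  assert (Hnd0 := nd_i v i Hnd).
  set (P := v i) in *. set (Q := v (nxt i)) in *. set (R0 := v (prv i)) in *.
  set (ps := fun s => (fst P + s*(fst ic - fst P), snd P + s*(snd ic - snd P))).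
  assert (B1 : bisector v i = vadd (unitv (vsub R0 P)) (unitv (vsub Q P))) by reflexivity.
  assert (B2 : bisector v (nxt i) = vadd (unitv (vsub P Q)) (unitv (vsub R0 Q))).
  { unfold bisector. rewrite prv_nxt, nxt_nxt. reflexivity. }
  assert (B3 : bisector v (prv i) = vadd (unitv (vsub Q R0)) (unitv (vsub P R0))).
  { unfold bisector. rewrite prv_prv, nxt_prv. reflexivity. }
  assert (C1 : cross (vsub R0 P) (vsub Q P) <> 0).
  { intro E; apply Hnd0. replace (cross (vsub Q P) (vsub R0 P)) with (- cross (vsub R0 P) (vsub Q P))
      by (unfold cross, vsub; simpl; ring). rewrite E; ring. }
  assert (C2 : cross (vsub P Q) (vsub R0 Q) <> 0).
  { intro E; apply Hnd0. replace (cross (vsub Q P) (vsub R0 P)) with (- cross (vsub P Q) (vsub R0 Q))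
      by (unfold cross, vsub; simpl; ring). rewrite E; ring. }
  assert (C3 : cross (vsub Q R0) (vsub P R0) <> 0).
  { intro E; apply Hnd0. replace (cross (vsub Q P) (vsub R0 P)) with (- cross (vsub Q R0) (vsub P R0))
      by (unfold cross, vsub; simpl; ring). rewrite E; ring. }
  assert (Hr1 : dist_line P Q ic = r) by apply Hr.
  assert (Hr2 : dist_line R0 P ic = r).
  { unfold R0, P. rewrite <- (nxt_prv i) at 2. apply Hr. }
  assert (Dbl : forall s, 0 < s <= 1 -> double_pt v w (i, ps s) (prv i, ps s)).
  { intros s Hs.
    assert (Hsr : s * r <= w / 2).
    { destruct (Rle_dec 0 r). nra. nra. }
    assert (D1 := DOT P R0 Q (ps s) (s*ga) (s*be) C1 ltac:(nra) ltac:(nra)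
      ltac:(simpl; rewrite Hic1; replace al with (1-be-ga) by lra; ring)
      ltac:(simpl; rewrite Hic2; replace al with (1-be-ga) by lra; ring)).
    assert (D2 := DOT Q P R0 (ps s) (1 - s + s*al) (s*ga) C2 ltac:(nra) ltac:(nra)
      ltac:(simpl; rewrite Hic1; replace be with (1-al-ga) by lra; ring)
      ltac:(simpl; rewrite Hic2; replace be with (1-al-ga) by lra; ring)).
    assert (D3 := DOT R0 Q P (ps s) (s*be) (1 - s + s*al) C3 ltac:(nra) ltac:(nra)
      ltac:(simpl; rewrite Hic1; replace ga with (1-al-be) by lra; ring)
      ltac:(simpl; rewrite Hic2; replace ga with (1-al-be) by lra; ring)).
    assert (Pos : 0 < dot (vsub (ps s) P) (bisector v i)).
    { rewrite B1. apply D1. nra. }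
    split; [|split; [|split]].
    - unfold in_ribbon, piece; simpl. fold P Q. split; [|split].
      + unfold ps. rewrite dl_scale by lra. rewrite Hr1. exact Hsr.
      + lra.
      + rewrite B2. apply D2.
    - unfold in_ribbon, piece; simpl. rewrite nxt_prv. fold P Q R0. split; [|split].
      + unfold ps. rewrite dl_scale2 by lra. rewrite Hr2. exact Hsr.
      + rewrite B3. apply D3.
      + lra.
    - reflexivity.
    - intros [_ [E|[[E _]|[_ E]]]]; simpl in E.
      + destruct i; discriminate.
      + destruct i; discriminate.
      + unfold on_fold_carrier in E. fold P in E. lra. }
  assert (Dps : forall s s', Defs.dist (ps s) (ps s') = Rabs (s - s') * vnorm (vsub ic P)).
  { intros s s'. unfold Defs.dist.
    replace (vsub (ps s) (ps s')) with ((s - s') * (fst ic - fst P), (s - s') * (snd ic - snd P))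
      by (unfold ps, vsub; simpl; apply (f_equal2 pair); ring).
    rewrite vnorm_scale. reflexivity. }
  assert (Dp0 : forall s, Defs.dist (ps s) P = Rabs s * vnorm (vsub ic P)).
  { intros s. unfold Defs.dist.
    replace (vsub (ps s) P) with (s * (fst ic - fst P), s * (snd ic - snd P))
      by (unfold ps, vsub; simpl; apply (f_equal2 pair); ring).
    rewrite vnorm_scale. reflexivity. }
  set (L := vnorm (vsub ic P)) in *.
  assert (HL : 0 <= L) by (unfold L, vnorm; apply sqrt_pos).
  assert (FL : fold_line v w i P).
  { exists 0. split.
    - rewrite Rabs_R0. destruct (Himm i) as [Hpi _].
      assert (Hb := acos_bound (let a := vsub (v (prv i)) (v i) in
        let b := vsub (v (nxt i)) (v i) in dot a b / (vnorm a * vnorm b))).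
      unfold fold_angle in *.
      assert (0 < cos (acos (let a := vsub (v (prv i)) (v i) in
        let b := vsub (v (nxt i)) (v i) in dot a b / (vnorm a * vnorm b)) / 2)).
      { apply cos_gt_0; lra. }
      apply Rlt_le, Rdiv_lt_0_compat; lra.
    - unfold P, vadd, vscale. apply injective_projections; simpl; ring. }
  destruct (HF i P FL) as [d [Hd Hnear]].
  set (g := fun s => c (i, ps s) (prv i, ps s)).
  assert (G1 : g 1 = (if F i then 1%Z else (-1)%Z)).
  { apply (lc g _ (d / (L + 1))).
    - apply Rdiv_lt_0_compat; lra.
    - intros s Hs Hs1. unfold g. apply Hnear. rewrite Dp0, Rabs_pos_eq by lra.
      destruct Hs as [Hs0 Hs]. apply Rmult_lt_compat_r with (r := L + 1) in Hs; [|lra].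
      unfold Rdiv in Hs. rewrite Rmult_assoc, Rinv_l in Hs by lra. nra.
      apply Dbl; lra.
    - intros s Hs. destruct (Hcont _ _ (Dbl s Hs)) as [d' [Hd' Hc']].
      exists (d' / (L + 1)). split. apply Rdiv_lt_0_compat; lra.
      intros s' Hs' Hab. unfold g. apply Hc'. apply Dbl; auto.
      + exists (i, ps s). split. split; [reflexivity| left; reflexivity]. split. reflexivity.
        simpl. rewrite Dps. rewrite Rabs_minus_sym.
        apply Rmult_lt_compat_r with (r := L + 1) in Hab; [|lra].
        unfold Rdiv in Hab. rewrite Rmult_assoc, Rinv_l in Hab by lra.
        assert (0 <= Rabs (s' - s)) by apply Rabs_pos. nra.
      + exists (prv i, ps s). split. split; [reflexivity| left; reflexivity]. split. reflexivity.
        simpl. rewrite Dps. rewrite Rabs_minus_sym.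
        apply Rmult_lt_compat_r with (r := L + 1) in Hab; [|lra].
        unfold Rdiv in Hab. rewrite Rmult_assoc, Rinv_l in Hab by lra.
        assert (0 <= Rabs (s' - s)) by apply Rabs_pos. nra. }
  assert (E1 : ps 1 = ic).
  { unfold ps. destruct ic as [x y]. simpl. apply (f_equal2 pair); ring. }
  split.
  - rewrite <- E1. apply Dbl; lra.
  - unfold g in G1. rewrite E1 in G1. exact G1.
Qed.

Lemma double_sym v w x y : double_pt v w x y -> double_pt v w y x.
Proof.
  intros [H1 [H2 [H3 H4]]]. split; [auto|split; [auto|split; [auto|]]].
  intros [E1 E2]; apply H4. split; [auto|].
  unfold image in *. destruct E2 as [E|[[E F]|[E F]]].
  - left; auto.
  - right; right. split; auto. rewrite <- E1; auto.
  - right; left. split; auto. rewrite <- E1; auto.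
Qed.

Theorem theorem5p1 (v : idx -> pt) (w : R) (F : idx -> bool) (r : R) :
  nondegenerate v ->
  allowed v w F ->
  same_type F ->
  inradius v r ->
  w / 2 <= r.
Proof.
  intros Hnd [Hw [Himm [c [Hc HF]]]] [S1 S2] [a0 [a1 [a2 [h0 [h1 [h2 [hs Hr]]]]]]].
  set (ic := vadd (vscale a0 (v I0)) (vadd (vscale a1 (v I1)) (vscale a2 (v I2)))) in *.
  destruct (Rle_lt_dec (w/2) r) as [ok|Hlt]; [exact ok|exfalso].
  assert (K0 := key v w c F r ic I0 Hnd Hw Himm Hc HF
     ltac:(exists a0, a1, a2; repeat split; auto; unfold ic, vadd, vscale; simpl; ring) Hr Hlt).
  assert (K1 := key v w c F r ic I1 Hnd Hw Himm Hc HF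
     ltac:(exists a1, a2, a0; repeat split; auto; try lra; unfold ic, vadd, vscale; simpl; ring) Hr Hlt).
  assert (K2 := key v w c F r ic I2 Hnd Hw Himm Hc HF
     ltac:(exists a2, a0, a1; repeat split; auto; try lra; unfold ic, vadd, vscale; simpl; ring) Hr Hlt).
  simpl in K0, K1, K2.
  destruct Hc as [Hwd [Hpm [Hanti [Htr Hcont]]]].
  destruct K0 as [D0 E0], K1 as [D1 E1], K2 as [D2 E2].
  rewrite <- S1 in E1. rewrite <- S2, <- S1 in E2.
  destruct (F I0).
  - assert (T := Htr _ _ _ D2 D1 (double_sym _ _ _ _ D0) E2 E1).
    rewrite (Hanti _ _ D0), E0 in T. discriminate.
  - assert (A1 := Hanti _ _ D1). assert (A2 := Hanti _ _ D2). assert (A0 := Hanti _ _ D0).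
    rewrite E1 in A1. rewrite E2 in A2. rewrite E0 in A0. simpl in A0, A1, A2.
    assert (T := Htr _ _ _ (double_sym _ _ _ _ D1) (double_sym _ _ _ _ D2) D0 A1 A2).
    rewrite E0 in T. discriminate.
Qed.
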